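(* For all loop-free hybrid programs $A,B,C,D$ and every set of variables $H$: if $FV(C)\cup FV(D)\subseteq H$, $A\equiv_H B$, and $C\equiv_H D$, then $(A;C)\equiv_H(B;D)$.
   Context: Hybrid programs and their transition semantics $[\![\cdot]\!]$ are as in differential dynamic logic ($x:=\theta$, $x:=*$, $?\phi$, $x'=\theta\,\&\,Q$, $;$, $\cup$, $^*$); a program is loop-free if it contains no $^*$. $FV(\alpha)$ is the standard $d\mathcal{L}$ set of free variables of $\alpha$: $FV(x:=\theta)=FV(\theta)$, $FV(x:=* )=\emptyset$, $FV(?\phi)=FV(\phi)$, $FV(x'=\theta\,\&\,Q)=\{x\}\cup FV(\theta)\cup FV(Q)$, $FV(\alpha\cup\beta)=FV(\alpha)\cup FV(\beta)$, $FV(\alpha;\beta)=FV(\alpha)\cup(FV(\beta)\setminus MBV(\alpha))$, $FV(\alpha^* )=FV(\alpha)$, where $MBV$ (must-bound variables) is: $\{x\}$ for $x:=\theta$ and $x:=*$, $\emptyset$ for tests and loops, $\{x,x'\}$ for ODEs, $MBV(\alpha\cup\beta)=MBV(\alpha)\cap MBV(\beta)$, $MBV(\alpha;\beta)=MBV(\alpha)\cup MBV(\beta)$. States $\sigma,\sigma'$ satisfy $\sigma\approx_H\sigma'$ iff they agree on every variable in $H$. For loop-free programs, $\alpha\equiv_H\beta$ iff for all states $\sigma_0,\sigma_1$ with $(\sigma_0,\sigma_1)\in[\![\alpha]\!]$ there exist $\sigma'_0,\sigma'_1$ with $(\sigma'_0,\sigma'_1)\in[\![\beta]\!]$, $\sigma_0\approx_H\sigma'_0$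 and $\sigma_1\approx_H\sigma'_1$, and symmetrically with $\alpha,\beta$ exchanged. *)

(* Defs.v *)
From Stdlib Require Import Reals.
Open Scope R_scope.

(* Variables: ordinary variables x_n and differential symbols x_n'. *)
Inductive var : Type := Var (n : nat) | DVar (n : nat).

Definition var_eq_dec (x y : var) : {x = y} + {x <> y}.
Proof. decide equality; apply PeanoNat.Nat.eq_dec. Defined.

Definition state := var -> R.

Definition upd (s : state) (x : var) (v : R) : state :=
  fun y => if var_eq_dec y x then v else s y.

Definition vset := var -> Prop.

Inductive term : Type :=
  | TVar (x : var)
  | TConst (c : R)
  | TNeg (a : term)
  | TPlus (a b : term)
  | TMinus (a b : term)
  | TMult (a b : term).

Fixpoint teval (s : state) (t : term) : R :=
  match t with
  | TVar x => s x
  | TConst c => c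
  | TNeg a => - teval s a
  | TPlus a b => teval s a + teval s b
  | TMinus a b => teval s a - teval s b
  | TMult a b => teval s a * teval s b
  end.

Inductive fml : Type :=
  | FTrue | FFalse
  | FEq (a b : term) | FGe (a b : term) | FGt (a b : term)
  | FNot (p : fml) | FAnd (p q : fml) | FOr (p q : fml) | FImp (p q : fml)
  | FForall (x : var) (p : fml) | FExists (x : var) (p : fml)
  | FBox (a : prog) (p : fml) | FDia (a : prog) (p : fml)
with prog : Type :=
  | PAssign (x : var) (t : term)
  | PRand (x : var)
  | PTest (p : fml)
  | PODE (n : nat) (t : term) (q : fml)   (* x_n' = t & q *)
  | PSeq (a b : prog)
  | PChoice (a b : prog)
  | PLoop (a : prog).

(* Derivative of f at t within the domain D (one-sided at boundary points). *)
Definition deriv_within (f : R -> R) (D : R -> Prop) (t l : R) : Prop :=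
  forall eps, 0 < eps -> exists delta, 0 < delta /\
    forall h, h <> 0 -> Rabs h < delta -> D (t + h) ->
      Rabs ((f (t + h) - f t) / h - l) < eps.

Fixpoint fsem (p : fml) (s : state) {struct p} : Prop :=
  match p with
  | FTrue => True
  | FFalse => False
  | FEq a b => teval s a = teval s b
  | FGe a b => teval s a >= teval s b
  | FGt a b => teval s a > teval s b
  | FNot q => ~ fsem q s
  | FAnd q r => fsem q s /\ fsem r s
  | FOr q r => fsem q s \/ fsem r s
  | FImp q r => fsem q s -> fsem r s
  | FForall x q => forall v, fsem q (upd s x v)
  | FExists x q => exists v, fsem q (upd s x v)
  | FBox a q => forall s', psem a s s' -> fsem q s'
  | FDia a q => exists s', psem a s s' /\ fsem q s'
  end
with psem (a : prog) (s s' : state) {struct a} : Prop :=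
  match a with
  | PAssign x t => s' = upd s x (teval s t)
  | PRand x => exists v, s' = upd s x v
  | PTest q => s' = s /\ fsem q s
  | PODE n t q =>
      exists (r : R) (phi : R -> state),
        0 <= r /\
        (forall y, y <> DVar n -> phi 0 y = s y) /\
        s' = phi r /\
        (forall z, 0 <= z <= r ->
           phi z (DVar n) = teval (phi z) t /\ fsem q (phi z) /\
           (forall y, y <> Var n -> y <> DVar n -> phi z y = phi 0 y)) /\
        (0 < r -> forall z, 0 <= z <= r ->
           deriv_within (fun u => phi u (Var n)) (fun u => 0 <= u <= r) z
                        (phi z (DVar n)))
  | PSeq a1 a2 => exists m, psem a1 s m /\ psem a2 m s'
  | PChoice a1 a2 => psem a1 s s' \/ psem a2 s s'
  | PLoop a1 => exists (k : nat) (f : nat -> state),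
      f O = s /\ f k = s' /\ forall i, (i < k)%nat -> psem a1 (f i) (f (S i))
  end.

Fixpoint FVt (t : term) : vset :=
  match t with
  | TVar x => fun v => v = x
  | TConst _ => fun _ => False
  | TNeg a => FVt a
  | TPlus a b | TMinus a b | TMult a b => fun v => FVt a v \/ FVt b v
  end.

Fixpoint MBV (a : prog) : vset :=
  match a with
  | PAssign x _ | PRand x => fun v => v = x
  | PTest _ => fun _ => False
  | PODE n _ _ => fun v => v = Var n \/ v = DVar n
  | PSeq a1 a2 => fun v => MBV a1 v \/ MBV a2 v
  | PChoice a1 a2 => fun v => MBV a1 v /\ MBV a2 v
  | PLoop _ => fun _ => False
  end.

Fixpoint FVf (p : fml) : vset :=
  match p with
  | FTrue | FFalse => fun _ => False
  | FEq a b | FGe a b | FGt a b => fun v => FVt a v \/ FVt b v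
  | FNot q => FVf q
  | FAnd q r | FOr q r | FImp q r => fun v => FVf q v \/ FVf r v
  | FForall x q | FExists x q => fun v => FVf q v /\ v <> x
  | FBox a q | FDia a q => fun v => FVp a v \/ (FVf q v /\ ~ MBV a v)
  end
with FVp (a : prog) : vset :=
  match a with
  | PAssign _ t => FVt t
  | PRand _ => fun _ => False
  | PTest q => FVf q
  | PODE n t q => fun v => v = Var n \/ FVt t v \/ FVf q v
  | PSeq a1 a2 => fun v => FVp a1 v \/ (FVp a2 v /\ ~ MBV a1 v)
  | PChoice a1 a2 => fun v => FVp a1 v \/ FVp a2 v
  | PLoop a1 => FVp a1
  end.

Fixpoint loop_free (a : prog) : Prop :=
  match a with
  | PAssign _ _ | PRand _ | PTest _ | PODE _ _ _ => True
  | PSeq a1 a2 | PChoice a1 a2 => loop_free a1 /\ loop_free a2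
  | PLoop _ => False
  end.

Definition agree (H : vset) (s s' : state) : Prop :=
  forall v, H v -> s v = s' v.

Definition equivH (H : vset) (a b : prog) : Prop :=
  (forall s0 s1, psem a s0 s1 ->
     exists s0' s1', psem b s0' s1' /\ agree H s0 s0' /\ agree H s1 s1') /\
  (forall s0 s1, psem b s0 s1 ->
     exists s0' s1', psem a s0' s1' /\ agree H s0 s0' /\ agree H s1 s1').

(* Main.v *)
Require Import Defs.
From Stdlib Require Import Reals Lia Classical.
Open Scope R_scope.

Scheme fml_mut := Induction for fml Sort Prop
with prog_mut := Induction for prog Sort Prop.
Combined Scheme fp_mut from fml_mut, prog_mut.

Lemma teval_coinc (t : term) (s s' : state) :
  agree (FVt t) s s' -> teval s t = teval s' t.
Proof.
  unfold agree; induction t; simpl; intros Hag;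
  try (rewrite IHt1, IHt2 by (intros v Hv; apply Hag; tauto); reflexivity).
  - apply Hag; reflexivity.
  - reflexivity.
  - rewrite IHt by exact Hag; reflexivity.
Qed.

Lemma agree_sym V s s' : agree V s s' -> agree V s' s.
Proof. unfold agree; intros H v Hv; symmetry; auto. Qed.

Lemma agree_sub (V W : vset) s s' : (forall v, W v -> V v) -> agree V s s' -> agree W s s'.
Proof. unfold agree; auto. Qed.

Lemma agree_trans V s1 s2 s3 : agree V s1 s2 -> agree V s2 s3 -> agree V s1 s3.
Proof. unfold agree; intros H1 H2 v Hv. rewrite H1, H2; auto. Qed.

Lemma agree_upd V s s' x v : agree (fun y => V y /\ y <> x) s s' ->
  agree V (upd s x v) (upd s' x v).
Proof.
  unfold agree, upd; intros H y Hy. destruct (var_eq_dec y x); auto.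
Qed.

Lemma deriv_within_ext f g D t l : (forall u, f u = g u) ->
  deriv_within f D t l -> deriv_within g D t l.
Proof.
  unfold deriv_within; intros E Hd eps He. destruct (Hd eps He) as [d [Hd0 Hd1]].
  exists d; split; auto. intros h Hh Ha HD. rewrite <- !E; auto.
Qed.

Lemma agree_box (a : prog) (p : fml) t t' :
  agree (fun v => (FVp a v \/ FVf p v /\ ~ MBV a v) \/ MBV a v) t t' -> agree (FVf p) t t'.
Proof.
  intros Hag v Hv. apply Hag. destruct (classic (MBV a v)); [right; auto | left; right; auto].
Qed.

Definition P_f (p : fml) := forall s s', agree (FVf p) s s' -> (fsem p s <-> fsem p s').
Definition P_p (a : prog) := forall (V : vset) s s' t, (forall v, FVp a v -> V v) ->
  agree V s s' -> psem a s t ->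
  exists t', psem a s' t' /\ agree (fun v => V v \/ MBV a v) t t'.


Lemma coinc_all : (forall p, P_f p) /\ (forall a, P_p a).
Proof.
  apply (fp_mut P_f P_p); unfold P_f, P_p; simpl; intros.
  - tauto.
  - tauto.
  - rewrite (teval_coinc a s s'), (teval_coinc b s s') by (apply (agree_sub _ _ _ _ (fun v Hv => or_intror Hv) H) || apply (agree_sub _ _ _ _ (fun v Hv => or_introl Hv) H)); tauto.
  - rewrite (teval_coinc a s s'), (teval_coinc b s s') by (apply (agree_sub _ _ _ _ (fun v Hv => or_intror Hv) H) || apply (agree_sub _ _ _ _ (fun v Hv => or_introl Hv) H)); tauto.
  - rewrite (teval_coinc a s s'), (teval_coinc b s s') by (apply (agree_sub _ _ _ _ (fun v Hv => or_intror Hv) H) || apply (agree_sub _ _ _ _ (fun v Hv => or_introl Hv) H)); tauto.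
  - rewrite (H s s' H0); tauto.
  - rewrite (H s s'), (H0 s s') by (eapply agree_sub; [|eassumption]; simpl; tauto); tauto.
  - rewrite (H s s'), (H0 s s') by (eapply agree_sub; [|eassumption]; simpl; tauto); tauto.
  - rewrite (H s s'), (H0 s s') by (eapply agree_sub; [|eassumption]; simpl; tauto); tauto.
  - split; intros Hq v; specialize (H (upd s x v) (upd s' x v) (agree_upd _ _ _ _ _ H0)); [apply H | apply H]; auto.
  - split; intros [v Hq]; exists v; specialize (H (upd s x v) (upd s' x v) (agree_upd _ _ _ _ _ H0)); [apply H | apply H]; auto.
  -
    assert (Hdir : forall s1 s2, agree (fun v => FVp a v \/ FVf p v /\ ~ MBV a v) s1 s2 ->
       (forall s', psem a s1 s' -> fsem p s') -> forall s', psem a s2 s' -> fsem p s').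
    { intros s1 s2 Hag Hb t Ht.
      destruct (H _ s2 s1 t (fun v Hv => or_introl Hv) (agree_sym _ _ _ Hag) Ht) as [t' [Ht' Hag']].
      specialize (Hb _ Ht'). apply (proj1 (H0 t' t (agree_sym _ _ _ (agree_box _ _ _ _ Hag')))) in Hb; auto. }
    split; apply Hdir; auto using agree_sym.
  -
    assert (Hdir : forall s1 s2, agree (fun v => FVp a v \/ FVf p v /\ ~ MBV a v) s1 s2 ->
       (exists s', psem a s1 s' /\ fsem p s') -> exists s', psem a s2 s' /\ fsem p s').
    { intros s1 s2 Hag [t [Ht Hb]].
      destruct (H _ s1 s2 t (fun v Hv => or_introl Hv) Hag Ht) as [t' [Ht' Hag']].
      exists t'; split; auto.
      apply (proj1 (H0 t t' (agree_box _ _ _ _ Hag'))) in Hb; auto. }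
    split; apply Hdir; auto using agree_sym.
  -
    subst t0. exists (upd s' x (teval s' t)). split; auto.
    rewrite (teval_coinc t s s') by (eapply agree_sub; [|eassumption]; auto).
    intros v Hv; unfold upd; destruct (var_eq_dec v x); auto.
    destruct Hv; [apply H0; auto| contradiction].
  - destruct H1 as [v Hv]; subst t. exists (upd s' x v); split; [exists v; auto|].
    intros y Hy; unfold upd; destruct (var_eq_dec y x); auto.
    destruct Hy; [apply H0; auto| contradiction].
  - destruct H2 as [Ht Hp]; subst t. exists s'; split.
    + split; auto. apply (H s s'); auto. eapply agree_sub; [|eassumption]; auto.
    + intros v [Hv|[]]; auto.
  -
    destruct H2 as [r [phi [Hr [H0p [Hs' [Hz Hd]]]]]]; subst t0.
    set (psi := fun z y => if var_eq_dec y (Var n) then phi z y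
                  else if var_eq_dec y (DVar n) then phi z y else s' y).
    assert (Hpsi : forall z, 0 <= z <= r -> agree (fun v => V v \/ v = Var n \/ v = DVar n) (phi z) (psi z)).
    { intros z Hzr y Hy; unfold psi.
      destruct (var_eq_dec y (Var n)); auto. destruct (var_eq_dec y (DVar n)); auto.
      destruct (Hz z Hzr) as [_ [_ Hc]]. rewrite Hc by auto. rewrite H0p by auto.
      apply H1. destruct Hy as [Hy|[Hy|Hy]]; auto; contradiction. }
    exists (psi r); split.
    + exists r, psi. split; [auto|]. split; [|split; [reflexivity|split]].
      * intros y Hy; unfold psi. destruct (var_eq_dec y (Var n)); auto.
        { subst y. rewrite H0p by (intro E; discriminate). apply H1; apply H0; auto. }
        destruct (var_eq_dec y (DVar n)); auto; contradiction.
      * intros z Hzr. destruct (Hz z Hzr) as [Ht [Hq Hc]]. repeat split.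
        -- unfold psi at 1. destruct (var_eq_dec (DVar n) (Var n)); [discriminate|].
           destruct (var_eq_dec (DVar n) (DVar n)); [|congruence].
           rewrite Ht. apply teval_coinc. eapply agree_sub; [|apply Hpsi; auto]. intros; left; apply H0; auto.
        -- apply (H (phi z)); auto. eapply agree_sub; [|apply Hpsi; auto]. intros; left; apply H0; auto.
        -- intros y Hy1 Hy2; unfold psi.
           destruct (var_eq_dec y (Var n)); [contradiction|]. destruct (var_eq_dec y (DVar n)); [contradiction|]. auto.
      * intros Hr0 z Hzr. eapply deriv_within_ext; [|].
        2: { assert (E : phi z (DVar n) = psi z (DVar n)).
             { unfold psi. destruct (var_eq_dec (DVar n) (Var n)); [discriminate|].
               destruct (var_eq_dec (DVar n) (DVar n)); congruence. }
             rewrite <- E. apply Hd; auto. }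
        intros u; simpl. unfold psi. destruct (var_eq_dec (Var n) (Var n)); congruence.
    + eapply agree_sub; [|apply Hpsi; split; [auto| apply Rle_refl]]. intros v [Hv|Hv]; auto.
  -
    destruct H3 as [m [Hm Ht]].
    destruct (H V s s' m (fun v Hv => H1 v (or_introl Hv)) H2 Hm) as [m' [Hm' Hag]].
    destruct (H0 (fun v => V v \/ MBV a v) m m' t) as [t' [Ht' Hag']]; auto.
    { intros v Hv. destruct (classic (MBV a v)); auto. }
    exists t'; split; [exists m'; auto|]. eapply agree_sub; [|exact Hag']. simpl; tauto.
  - destruct H3 as [Ht|Ht].
    + destruct (H V s s' t (fun v Hv => H1 v (or_introl Hv)) H2 Ht) as [t' [Ht' Hag]].
      exists t'; split; [left; auto|]. eapply agree_sub; [|exact Hag]; simpl; tauto.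
    + destruct (H0 V s s' t (fun v Hv => H1 v (or_intror Hv)) H2 Ht) as [t' [Ht' Hag]].
      exists t'; split; [right; auto|]. eapply agree_sub; [|exact Hag]; simpl; tauto.
  -
    destruct H2 as [k [f [Hf0 [Hfk Hstep]]]]; subst s t.
    assert (Hgen : forall j, (j <= k)%nat -> exists g : nat -> state,
              g O = s' /\ agree V (f j) (g j) /\ forall i, (i < j)%nat -> psem a (g i) (g (S i))).
    { induction j; intros Hj.
      - exists (fun _ => s'); repeat split; auto. intros; lia.
      - destruct IHj as [g [Hg0 [Hgj Hgs]]]; [lia|].
        destruct (H V (f j) (g j) (f (S j)) H0 Hgj (Hstep j ltac:(lia))) as [t' [Ht' Hag]].
        exists (fun i => if Nat.eqb i (S j) then t' else g i). repeat split.
        + simpl. auto.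
        + rewrite PeanoNat.Nat.eqb_refl. eapply agree_sub; [|exact Hag]. intros v Hv; left; exact Hv.
        + intros i Hi. destruct (Nat.eqb_spec i (S j)); [lia|].
          destruct (Nat.eqb_spec (S i) (S j)).
          * assert (i = j) by lia. subst i. exact Ht'.
          * apply Hgs; lia. }
    destruct (Hgen k (le_n k)) as [g [Hg0 [Hgk Hgs]]].
    exists (g k); split; [exists k, g; auto|]. eapply agree_sub; [|exact Hgk]. intros v [Hv|[]]; auto.
Qed.

Theorem theorem2 (A B C D : prog) (H : vset) :
  loop_free A -> loop_free B -> loop_free C -> loop_free D ->
  (forall v, FVp C v \/ FVp D v -> H v) ->
  equivH H A B -> equivH H C D ->
  equivH H (PSeq A C) (PSeq B D).
Proof.
  intros _ _ _ _ HFV [HAB HBA] [HCD HDC]. split.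
  - intros s0 s2 [m [Hm Hs]].
    destruct (HAB _ _ Hm) as [s0' [m' [Hm' [Ha0 Ham]]]].
    destruct (HCD _ _ Hs) as [m'' [s2' [Hs' [Hb0 Hb1]]]].
    destruct ((proj2 coinc_all) D H m'' m' s2' (fun v Hv => HFV v (or_intror Hv))
       (agree_trans _ _ _ _ (agree_sym _ _ _ Hb0) Ham) Hs') as [s2'' [Hs2 Hag]].
    exists s0', s2''; repeat split; auto.
    + exists m'; auto.
    + eapply agree_trans; [exact Hb1|]. eapply agree_sub; [|exact Hag]. intros v Hv; left; exact Hv.
  - intros s0 s2 [m [Hm Hs]].
    destruct (HBA _ _ Hm) as [s0' [m' [Hm' [Ha0 Ham]]]].
    destruct (HDC _ _ Hs) as [m'' [s2' [Hs' [Hb0 Hb1]]]].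
    destruct ((proj2 coinc_all) C H m'' m' s2' (fun v Hv => HFV v (or_introl Hv))
       (agree_trans _ _ _ _ (agree_sym _ _ _ Hb0) Ham) Hs') as [s2'' [Hs2 Hag]].
    exists s0', s2''; repeat split; auto.
    + exists m'; auto.
    + eapply agree_trans; [exact Hb1|]. eapply agree_sub; [|exact Hag]. intros v Hv; left; exact Hv.
Qed.
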